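(* Let $E$ be a smooth curve of genus $1$ and $p\in E$ a point. Consider the multiplication map $$\operatorname{Sym}^2H^0(E,\mathcal{O}_E(4p))\to H^0(E,\mathcal{O}_E(8p)).$$ Then, up to scaling (i.e. as a point of $\mathbb{P}\ker$), there is a unique nonzero element $\rho_E$ in the kernel of this map satisfying $\operatorname{ord}_p(\rho_E)\ge 4$, i.e. lying in the span of the symmetric tensors $\sigma\otimes\tau$ with $\sigma,\tau\in H^0(E,\mathcal{O}_E(4p))$ and $\operatorname{ord}_p(\sigma)+\operatorname{ord}_p(\tau)\ge 4$.
   Context: This arises in the inductive degeneration argument for the Strong Maximal Rank Conjecture in $\mathbb{P}^4$: for a nodal curve $C=D\cup_p E$ with $[D,p]\in\mathcal{M}_{g-1,1}$ general and $[E,p]\in\mathcal{M}_{1,1}$, the $E$-aspect of the relevant limit $g^4_d$ is forced to be $V_E=(d-5)p+H^0(E,\mathcal{O}_E(5p))$, and after removing the base point $p$ the $E$-aspect quadric $\rho_E$ becomes an element of the kernel of $\operatorname{Sym}^2H^0(E,\mathcal{O}_E(4p))\to H^0(E,\mathcal{O}_E(8p))$ with $\operatorname{ord}_p(\rho_E)\ge 4$. Here the order at $p$ of a quadric is computed via the vanishing orders at $p$ of the sections in its tensors. *)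

(* Defs.v *)
From HB Require Import structures.
From mathcomp Require Import all_boot all_order all_algebra.
Set Implicit Arguments. Unset Strict Implicit. Unset Printing Implicit Defensive.
Import GRing.Theory.
Local Open Scope ring_scope.

(* A smooth genus-1 curve E with a point p, in Weierstrass form:
     E : y^2 + a1 x y + a3 y = x^3 + a2 x^2 + a4 x + a6,
   p = the point at infinity, with nonzero discriminant (smoothness). *)
Record weierstrass (k : fieldType) := Weierstrass {
  wa1 : k; wa2 : k; wa3 : k; wa4 : k; wa6 : k }.

Section Curve.
Variables (k : fieldType) (W : weierstrass k).
Let a1 := wa1 W. Let a2 := wa2 W. Let a3 := wa3 W.
Let a4 := wa4 W. Let a6 := wa6 W.

Definition discriminant : k :=
  let b2 := a1 ^+ 2 + 4%:R * a2 in
  let b4 := 2%:R * a4 + a1 * a3 in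
  let b6 := a3 ^+ 2 + 4%:R * a6 in
  let b8 := a1 ^+ 2 * a6 + 4%:R * a2 * a6 - a1 * a3 * a4 + a2 * a3 ^+ 2
            - a4 ^+ 2 in
  - b2 ^+ 2 * b8 - 8%:R * b4 ^+ 3 - 27%:R * b6 ^+ 2 + 9%:R * b2 * b4 * b6.

Definition smooth_weierstrass : Prop := discriminant != 0.

(* Regular functions on E \ {p}: the coordinate ring k[x,y]/(F), every
   element written uniquely as P(x) + Q(x) y, encoded as the pair (P, Q). *)
Definition fn := ({poly k} * {poly k})%type.

Definition cubic : {poly k} :=
  'X^3 + a2%:P * 'X^2 + a4%:P * 'X + a6%:P.

Definition fadd (f g : fn) : fn := (f.1 + g.1, f.2 + g.2).
Definition fscale (c : k) (f : fn) : fn := (c *: f.1, c *: f.2).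
Definition fzero : fn := (0, 0).

(* multiplication, reducing with y^2 = cubic(x) - (a1 x + a3) y *)
Definition fmul (f g : fn) : fn :=
  (f.1 * g.1 + f.2 * g.2 * cubic,
   f.1 * g.2 + g.1 * f.2 - f.2 * g.2 * (a1 *: 'X + a3%:P)).

(* pole order at p (x has a pole of order 2, y of order 3) *)
Definition poleord (f : fn) : nat :=
  maxn (if f.1 == 0 then 0%N else ((size f.1).-1).*2)
       (if f.2 == 0 then 0%N else (((size f.2).-1).*2 + 3)%N).

Definition H0 (n : nat) (f : fn) : Prop := (poleord f <= n)%N.

Definition ebasis (i : 'I_4) : fn :=
  match val i with
  | 0 => (1, 0)
  | 1 => ('X, 0)
  | 2 => (0, 1)
  | _ => ('X^2, 0)
  end.

Definition sec (s : 'rV[k]_4) : fn :=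
  (\sum_i s 0 i *: (ebasis i).1, \sum_i s 0 i *: (ebasis i).2).

(* vanishing order at p of a nonzero section f of O_E(n p):  n - poleord f.
   The zero section has infinite order. *)
Definition ordp (n : nat) (f : fn) : nat := (n - poleord f)%N.

(* Sym^2 H^0(O_E(4p)) is represented in the basis e_i e_j (i <= j) as
   upper triangular 4x4 matrices of coefficients. *)
Definition is_sym2 (q : 'M[k]_4) : Prop := forall i j : 'I_4, (j < i)%N -> q i j = 0.

Definition symprod (s t : 'rV[k]_4) : 'M[k]_4 :=
  \matrix_(i, j) (if (i < j)%N then s 0 i * t 0 j + s 0 j * t 0 i
                  else if i == j then s 0 i * t 0 i else 0).

Definition mult (q : 'M[k]_4) : fn :=
  (\sum_(i < 4) \sum_(j < 4 | (i <= j)%N) q i j *: (fmul (ebasis i) (ebasis j)).1,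
   \sum_(i < 4) \sum_(j < 4 | (i <= j)%N) q i j *: (fmul (ebasis i) (ebasis j)).2).

(* ord_p(sigma) + ord_p(tau) >= 4, with ord_p(0) = infinity *)
Definition good_pair (st : 'rV[k]_4 * 'rV[k]_4) : Prop :=
  sec st.1 = fzero \/ sec st.2 = fzero \/
  (4 <= ordp 4 (sec st.1) + ordp 4 (sec st.2))%N.

Definition ord_ge4 (q : 'M[k]_4) : Prop :=
  exists l : seq ('rV[k]_4 * 'rV[k]_4),
    (forall st, st \in l -> good_pair st) /\
    q = \sum_(st <- l) symprod st.1 st.2.

End Curve.

(* Main.v *)
Require Import Defs.
From HB Require Import structures.
From mathcomp Require Import all_boot all_order all_algebra.
From mathcomp Require Import ring zify.
Import GRing.Theory.
Local Open Scope ring_scope.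
Lemma l1 : lift ord0 ord0 = (1 : 'I_4). Proof. exact/val_inj. Qed.
Lemma l2 : lift ord0 (lift ord0 ord0) = (2 : 'I_4). Proof. exact/val_inj. Qed.
Lemma l3 : lift ord0 (lift ord0 (lift ord0 ord0)) = (3 : 'I_4). Proof. exact/val_inj. Qed.
Lemma l0 : ord0 = (0 : 'I_4). Proof. exact/val_inj. Qed.

Lemma ord4 (i : 'I_4) : i = 0 \/ i = 1 \/ i = 2 \/ i = 3.
Proof.
case: i => [[|[|[|[|i]]]] Hi]; try (by left; apply/val_inj);
 try (by right; left; apply/val_inj); try (by right; right; left; apply/val_inj);
 try (by right; right; right; apply/val_inj).
Qed.

Section S.
Variable k : fieldType. Variable W : weierstrass k.
Implicit Type f : fn k.
Implicit Types s t : 'rV[k]_4.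

Lemma pole3 f : (poleord f <= 3)%N -> f.1`_2 = 0.
Proof.
rewrite /poleord geq_max => /andP[h _].
case: (eqVneq f.1 0) h => [->|nz]; first by rewrite coef0.
move=> h; apply: nth_default. move: h; case: (size f.1) => [|n] /=; rewrite -?muln2; lia.
Qed.

Lemma pole1 f : (poleord f <= 1)%N -> f.1`_1 = 0.
Proof.
rewrite /poleord geq_max => /andP[h _].
case: (eqVneq f.1 0) h => [->|nz]; first by rewrite coef0.
move=> h; apply: nth_default; move: h; case: (size f.1) => [|n] /=; rewrite -?muln2; lia.
Qed.

Lemma pole2 f : (poleord f <= 2)%N -> f.2 = 0.
Proof.
rewrite /poleord geq_max => /andP[_ h].
case: (eqVneq f.2 0) h => [->|nz] //.
rewrite -muln2 -subn1; lia.
Qed.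

Definition rho0 : 'M[k]_4 := \matrix_(i, j)
  (if (i == 0%N :> nat) && (j == 3%N :> nat) then 1 else
   if (i == 1%N :> nat) && (j == 1%N :> nat) then -1 else 0).

Lemma rho0E : rho0 0 3 = 1 /\ rho0 1 1 = -1 /\ rho0 0 0 = 0.
Proof. by rewrite !mxE. Qed.

Lemma symprodE (s t : 'rV[k]_4) : symprod s t 1 2 = s 0 1 * t 0 2 + s 0 2 * t 0 1.
Proof. by rewrite mxE. Qed.

Lemma secE (s : 'rV[k]_4) :
  sec s = ((s 0 0)%:P + s 0 1 *: 'X + s 0 3 *: 'X^2, (s 0 2)%:P).
Proof.
rewrite /sec !big_ord_recl !big_ord0 /= l3 l2 l1 l0 !scaler0 !addr0 !add0r !alg_polyC addrA.
by [].
Qed.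

Lemma sec1c1 s : (sec s).1`_1 = s 0 1.
Proof. by rewrite secE /= !coefD !coefZ coefC coefX coefXn /=; ring. Qed.
Lemma sec1c2 s : (sec s).1`_2 = s 0 3.
Proof. by rewrite secE /= !coefD !coefZ coefC coefX coefXn /=; ring. Qed.
Lemma sec2 s : (sec s).2 = 0 -> s 0 2 = 0.
Proof. by rewrite secE /= => /eqP; rewrite polyC_eq0 => /eqP. Qed.

Definition P3 (s : 'rV[k]_4) := [/\ s 0 1 = 0, s 0 2 = 0 & s 0 3 = 0].
Definition Q2 (s : 'rV[k]_4) := s 0 2 = 0 /\ s 0 3 = 0.

Lemma sec0 s : sec s = fzero k -> P3 s.
Proof.
move=> h; split; first by rewrite -sec1c1 h coef0.
  by apply: sec2; rewrite h.
by rewrite -sec1c2 h coef0.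
Qed.

Lemma ord3 s : (3 <= ordp 4 (sec s))%N -> P3 s.
Proof.
rewrite /ordp => h; split.
- rewrite -sec1c1; apply: pole1; lia.
- apply: sec2; apply: pole2; lia.
- rewrite -sec1c2; apply: pole3; lia.
Qed.

Lemma ord2 s : (2 <= ordp 4 (sec s))%N -> Q2 s.
Proof.
rewrite /ordp => h; split.
- apply: sec2; apply: pole2; lia.
- rewrite -sec1c2; apply: pole3; lia.
Qed.

Lemma goodE s t : good_pair (s, t) -> P3 s \/ P3 t \/ (Q2 s /\ Q2 t).
Proof.
case=> [/sec0|[/sec0|/= h]]; [by left|by right;left|].
case: (leqP 3 (ordp 4 (sec s))) => [/ord3|h1]; first by left.
case: (leqP 3 (ordp 4 (sec t))) => [/ord3|h2]; first by right; left.
right; right; split; apply: ord2; lia.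
Qed.

Lemma good_entries s t : good_pair (s, t) ->
  [/\ symprod s t 1 2 = 0, symprod s t 1 3 = 0, symprod s t 2 2 = 0,
      symprod s t 2 3 = 0 & symprod s t 3 3 = 0].
Proof.
move=> /goodE; rewrite !mxE /=.
by case=> [[-> -> ->]|[[-> -> ->]|[[-> ->] [-> ->]]]]; split; ring.
Qed.
End S.

Lemma multE (k : fieldType) (W : weierstrass k) (q : 'M[k]_4) :
  q 1 2 = 0 -> q 1 3 = 0 -> q 2 2 = 0 -> q 2 3 = 0 -> q 3 3 = 0 ->
  mult W q = ((q 0 0)%:P + (q 0 1)%:P * 'X + (q 0 3 + q 1 1)%:P * 'X^2, (q 0 2)%:P).
Proof.
move=> h12 h13 h22 h23 h33.
rewrite /mult.
under eq_bigr => i _ do rewrite big_mkcond.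
under [X in (_, X)]eq_bigr => i _ do rewrite big_mkcond.
rewrite !big_ord_recl !big_ord0 /=.
rewrite  l3 l2 l1 l0 h12 h13 h22 h23 h33 !scale0r.
rewrite -!mul_polyC !polyCD.
congr pair; ring.
Qed.

Theorem mainTheorem2 (k : closedFieldType) (W : weierstrass k) :
  smooth_weierstrass W ->
  exists rho : 'M[k]_4,
    [/\ is_sym2 rho, rho != 0, mult W rho = fzero k, ord_ge4 rho &
     forall rho' : 'M[k]_4,
       is_sym2 rho' -> mult W rho' = fzero k -> ord_ge4 rho' ->
       exists c : k, rho' = c *: rho].
Proof.
move=> _; exists (rho0 k); split.
- move=> [[|[|[|[|i]]]] Hi] [[|[|[|[|j]]]] Hj] //= _; by rewrite mxE.
- apply/negP => /eqP/matrixP/(_ 0 3); rewrite !mxE /= => /eqP; by rewrite oner_eq0.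
- rewrite multE ?mxE //= /fzero; congr pair; rewrite !(polyC0, mul0r, addr0, add0r, subrr, mulr0, mulrN1, addrN) //.
- rewrite /ord_ge4.
  exists [:: (delta_mx 0 0, delta_mx 0 3); (delta_mx 0 1, - delta_mx 0 1)]; split.
  + move=> st; rewrite !inE => /orP[] /eqP ->; right; right; rewrite /= /ordp !secE /poleord /= !mxE /=.
    1-2: rewrite !(scale0r, scale1r, oppr0, polyC0, add0r, addr0, scaleN1r, polyC1).
    1-2: rewrite -!size_poly_eq0 ?size_poly1 ?size_polyXn ?size_opp ?size_polyX ?size_poly0 //=.
  + rewrite big_cons big_cons big_nil addr0.
    apply/matrixP => i j; case: (ord4 i) => [->|[->|[->|->]]]; case: (ord4 j) => [->|[->|[->|->]]];
    rewrite !mxE /=; ring.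
- move=> r hs hm [l [hl hr]].
  have hz : forall i j : 'I_4, (forall s t : 'rV[k]_4, good_pair (s, t) -> symprod s t i j = 0) -> r i j = 0.
    move=> i j H; rewrite hr summxE big1_seq // => -[s t] /= hst; exact: (H s t (hl _ hst)).
  have h12 : r 1 2 = 0 by apply: hz => s t /good_entries [].
  have h13 : r 1 3 = 0 by apply: hz => s t /good_entries [].
  have h22 : r 2 2 = 0 by apply: hz => s t /good_entries [].
  have h23 : r 2 3 = 0 by apply: hz => s t /good_entries [].
  have h33 : r 3 3 = 0 by apply: hz => s t /good_entries [].
  move: hm; rewrite multE // /fzero => -[e1 e2].
  have c0 := congr1 (fun p : {poly k} => p`_0) e1.
  have c1 := congr1 (fun p : {poly k} => p`_1) e1.
  have c2 := congr1 (fun p : {poly k} => p`_2) e1.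
  have c3 := congr1 (fun p : {poly k} => p`_0) e2.
  move: c0 c1 c2 c3; rewrite /= !coefD !coefCM !coefC !coefX !coefXn ?coef0 /= => c0 c1 c2 c3.
  rewrite ?mulr0 ?addr0 ?add0r ?mulr1 in c0 c1 c2.
  exists (r 0 3); apply/matrixP => i j.
  case: (ord4 i) => [->|[->|[->|->]]]; case: (ord4 j) => [->|[->|[->|->]]]; rewrite !mxE /=.
  all: rewrite ?mulr0 ?mulr1 ?mulrN1.
  all: first [ by rewrite ?c0 ?c1 ?c3 ?h12 ?h13 ?h22 ?h23 ?h33 | by apply: hs | by apply/eqP; rewrite -addr_eq0 addrC c2 ].
Qed.
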